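(* Let $G$ be a countable infinite group, let $N\lhd G$ be a finite normal subgroup and let $H=G/N$. If the universal minimal flow $M(H)$ has the separated covering property (as an $H$-flow), then $M(G)$ has the separated covering property (as a $G$-flow).
   Context: The universal minimal flow $M(G)$ is the (unique up to isomorphism) minimal $G$-flow admitting a $G$-equivariant continuous surjection onto every minimal $G$-flow. For finite $D\subseteq G$, $S\subseteq G$ is $D$-separated if $Dg\cap Dh=\emptyset$ for distinct $g,h\in S$. A minimal $G$-flow $X$ has the separated covering property if for every finite $D\subseteq G$ and every non-empty open $U\subseteq X$ there is a $D$-separated $S\subseteq G$ with $S^{-1}U=X$. *)

(* Defs.v *)
From Stdlib Require Import List.
Import ListNotations.
Set Implicit Arguments.

Record Group := {
  gcar :> Type;
  gmul : gcar -> gcar -> gcar;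
  gone : gcar;
  ginv : gcar -> gcar;
  gmulA : forall x y z, gmul x (gmul y z) = gmul (gmul x y) z;
  gmul1l : forall x, gmul gone x = x;
  gmul1r : forall x, gmul x gone = x;
  gmulVl : forall x, gmul (ginv x) x = gone;
  gmulVr : forall x, gmul x (ginv x) = gone
}.

Arguments gmul {g} _ _.
Arguments gone {g}.
Arguments ginv {g} _.

Definition countable_type (T : Type) : Prop :=
  exists f : nat -> T, forall x, exists n, f n = x.

Definition infinite_type (T : Type) : Prop :=
  forall l : list T, exists x, ~ In x l.

Definition is_subgroup {G : Group} (N : G -> Prop) : Prop :=
  N gone /\ (forall x y, N x -> N y -> N (gmul x y)) /\ (forall x, N x -> N (ginv x)).

Definition is_normal_subgroup {G : Group} (N : G -> Prop) : Prop :=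
  is_subgroup N /\ forall g n, N n -> N (gmul (gmul g n) (ginv g)).

Definition finite_pred (T : Type) (P : T -> Prop) : Prop :=
  exists l : list T, forall x, P x -> In x l.

Definition is_hom {G H : Group} (f : G -> H) : Prop :=
  forall x y, f (gmul x y) = gmul (f x) (f y).

(** [pi : G -> H] is a quotient map G -> G/N : a surjective homomorphism
    with kernel exactly N (so H is G/N up to canonical isomorphism). *)
Definition is_quotient_map {G H : Group} (N : G -> Prop) (pi : G -> H) : Prop :=
  is_hom pi /\ (forall h, exists g, pi g = h) /\ (forall g, pi g = gone <-> N g).

Record Topology (X : Type) := {
  is_open : (X -> Prop) -> Prop;
  open_full : is_open (fun _ => True);
  open_inter : forall U V, is_open U -> is_open V -> is_open (fun x => U x /\ V x);
  open_union : forall F : (X -> Prop) -> Prop,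
      (forall U, F U -> is_open U) -> is_open (fun x => exists U, F U /\ U x)
}.

Definition is_closed (X : Type) (t : Topology X) (C : X -> Prop) : Prop :=
  is_open t (fun x => ~ C x).

Definition compact (X : Type) (t : Topology X) : Prop :=
  forall F : (X -> Prop) -> Prop,
    (forall U, F U -> is_open t U) ->
    (forall x, exists U, F U /\ U x) ->
    exists l : list (X -> Prop),
      (forall U, In U l -> F U) /\ (forall x, exists U, In U l /\ U x).

Definition hausdorff (X : Type) (t : Topology X) : Prop :=
  forall x y, x <> y -> exists U V, is_open t U /\ is_open t V /\ U x /\ V y /\
    (forall z, ~ (U z /\ V z)).

Definition continuous (X Y : Type) (tX : Topology X) (tY : Topology Y) (f : X -> Y) : Prop :=
  forall V, is_open tY V -> is_open tX (fun x => V (f x)).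

(** * Flows of a (discrete) group: compact Hausdorff spaces with a
    continuous action (G carries the discrete topology). *)
Record Flow (G : Group) := {
  fcar :> Type;
  ftop : Topology fcar;
  fact : G -> fcar -> fcar;
  fact_one : forall x, fact gone x = x;
  fact_mul : forall g h x, fact (gmul g h) x = fact g (fact h x);
  fact_cont : forall g, continuous ftop ftop (fact g);
  fcompact : compact ftop;
  fhausdorff : hausdorff ftop
}.

Arguments ftop {G} f.
Arguments fact {G} f _ _.

Definition minimal_flow {G : Group} (X : Flow G) : Prop :=
  (exists x : X, True) /\
  forall C : X -> Prop, is_closed (ftop X) C ->
    (forall g x, C x -> C (fact X g x)) ->
    (forall x, ~ C x) \/ (forall x, C x).

Definition flow_morphism {G : Group} {X Y : Flow G} (f : X -> Y) : Prop :=
  continuous (ftop X) (ftop Y) f /\ forall g x, f (fact X g x) = fact Y g (f x).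

Definition universal_minimal_flow {G : Group} (X : Flow G) : Prop :=
  minimal_flow X /\
  forall Y : Flow G, minimal_flow Y ->
    exists f : X -> Y, flow_morphism f /\ forall y, exists x, f x = y.

Definition separated {G : Group} (D : list G) (S : G -> Prop) : Prop :=
  forall g h, S g -> S h -> g <> h ->
    forall d1 d2, In d1 D -> In d2 D -> gmul d1 g <> gmul d2 h.

(** Separated covering property: S^{-1} U = X, i.e. every x has s ∈ S with s x ∈ U. *)
Definition separated_covering {G : Group} (X : Flow G) : Prop :=
  forall (D : list G) (U : X -> Prop), is_open (ftop X) U -> (exists x, U x) ->
    exists S : G -> Prop, separated D S /\
      forall x : X, exists s, S s /\ U (fact X s x).

(* Main.v *)
Require Import Defs.
From Stdlib Require Import List Classical ClassicalEpsilon FunctionalExtensionality PropExtensionality ProofIrrelevance.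
Import ListNotations.

Lemma open_ext (T : Type) (t : Topology T) (U V : T -> Prop) :
  is_open t U -> (forall x, U x <-> V x) -> is_open t V.
Proof.
  intros hU hUV. replace V with U; auto.
  apply functional_extensionality; intro x; apply propositional_extensionality; auto.
Qed.

Lemma open_inter_list (T A : Type) (t : Topology T) (l : list A) (W : A -> T -> Prop) :
  (forall a, In a l -> is_open t (W a)) -> is_open t (fun x => forall a, In a l -> W a x).
Proof.
  induction l as [|a l IH]; intros hW.
  - apply open_ext with (fun _ => True). apply open_full.
    intros x; split; intros _; [intros a []|exact I].
  - apply open_ext with (fun x => W a x /\ (forall b, In b l -> W b x)).
    + apply open_inter. apply hW; left; auto. apply IH; intros b hb; apply hW; right; auto.
    + intros x; split.
      * intros [h1 h2] b [<-|hb]; auto.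
      * intros h; split; [apply h; left; auto| intros b hb; apply h; right; auto].
Qed.

Lemma open_impl (T : Type) (t : Topology T) (P : Prop) (W : T -> Prop) :
  is_open t W -> is_open t (fun x => P -> W x).
Proof.
  intros hW. destruct (classic P) as [p|np].
  - apply open_ext with W; auto. intros x; split; auto.
  - apply open_ext with (fun _ => True). apply open_full. intros x; split; intros; [contradiction|exact I].
Qed.

Lemma list_lift (A B : Type) (R : A -> B -> Prop) (l : list B) :
  (forall b, In b l -> exists a, R a b) ->
  exists la, (forall a, In a la -> exists b, In b l /\ R a b) /\
             (forall b, In b l -> exists a, In a la /\ R a b).
Proof.
  induction l as [|b l IH]; intros h.
  - exists nil. split; intros ? [].
  - destruct (h b (or_introl eq_refl)) as [a ha].
    destruct IH as [la [h1 h2]]. { intros b' hb'; apply h; right; auto. }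
    exists (a :: la). split.
    + intros a' [<-|ha']. exists b; split; auto. left; auto.
      destruct (h1 a' ha') as [b' [hb' hr]]. exists b'; split; auto. right; auto.
    + intros b' [<-|hb']. exists a; split; auto; left; auto.
      destruct (h2 b' hb') as [a' [ha' hr]]. exists a'; split; auto; right; auto.
Qed.

Lemma gcancel_l (G : Group) (a x y : G) : gmul a x = gmul a y -> x = y.
Proof.
  intros h. transitivity (gmul (ginv a) (gmul a x)).
  - rewrite gmulA, gmulVl, gmul1l. reflexivity.
  - rewrite h, gmulA, gmulVl, gmul1l. reflexivity.
Qed.

Lemma gcancel_r (G : Group) (a x y : G) : gmul x a = gmul y a -> x = y.
Proof.
  intros h. transitivity (gmul (gmul x a) (ginv a)).
  - rewrite <- gmulA, gmulVr, gmul1r. reflexivity.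
  - rewrite h, <- gmulA, gmulVr, gmul1r. reflexivity.
Qed.

Lemma pi_one {G H : Group} {pi : G -> H} : is_hom pi -> pi gone = gone.
Proof.
  intros hp. apply gcancel_l with (pi gone). rewrite <- hp, gmul1l, gmul1r. reflexivity.
Qed.

Lemma pi_inv {G H : Group} {pi : G -> H} : is_hom pi -> forall g, pi (ginv g) = ginv (pi g).
Proof.
  intros hp g. apply gcancel_l with (pi g). rewrite <- hp, !gmulVr. apply pi_one; auto.
Qed.

Lemma min_cover (G : Group) (X : Flow G) (U : X -> Prop) :
  minimal_flow X -> is_open (ftop X) U -> (exists x, U x) ->
  exists hs : list G, forall x, exists h, In h hs /\ U (fact X h x).
Proof.
  intros [_ hmin] hU [x0 hx0].
  assert (hall : forall x, exists g, U (fact X g x)).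
  { destruct (hmin (fun x => forall g, ~ U (fact X g x))) as [h|h].
    - unfold is_closed.
      apply open_ext with (fun x => exists V, (exists g, V = fun y => U (fact X g y)) /\ V x).
      + apply open_union. intros V [g ->]. exact (fact_cont X g U hU).
      + intros x; split.
        * intros [V [[g ->] hV]] hc. exact (hc g hV).
        * intros hn. destruct (not_all_not_ex _ _ hn) as [g hg].
          exists (fun y => U (fact X g y)). eauto.
    - intros g x hx g'. rewrite <- fact_mul. apply hx.
    - intros x. specialize (h x). destruct (not_all_not_ex _ _ h) as [g hg]. eauto.
    - exfalso. apply (h x0 gone). rewrite fact_one. exact hx0. }
  destruct (fcompact X (fun V => exists g, V = fun y => U (fact X g y))) as [l [hl1 hl2]].
  - intros V [g ->]. exact (fact_cont X g U hU).
  - intros x. destruct (hall x) as [g hg]. exists (fun y => U (fact X g y)). eauto.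
  - destruct (list_lift _ _ (fun (g : G) (V : X -> Prop) => V = fun y => U (fact X g y)) l) as [la [h1 h2]].
    + intros V hV. destruct (hl1 V hV) as [g ->]. eauto.
    + exists la. intros x. destruct (hl2 x) as [V [hV hv]].
      destruct (h2 V hV) as [g [hg ->]]. eauto.
Qed.

Lemma return_inf (G : Group) (X : Flow G) (U : X -> Prop) :
  infinite_type G -> minimal_flow X -> is_open (ftop X) U -> (exists x, U x) ->
  forall (y : X) (F : list G), exists c, U (fact X c y) /\ ~ In c F.
Proof.
  intros hinf hmin hU hne y F.
  destruct (@min_cover _ _ _ hmin hU hne) as [hs hhs].
  destruct (hinf (flat_map (fun h => map (fun f => gmul (ginv h) f) F) hs)) as [g hg].
  destruct (hhs (fact X g y)) as [h [hh hU']].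
  exists (gmul h g). split. rewrite fact_mul; auto.
  intros hin. apply hg. apply in_flat_map. exists h. split; auto.
  apply in_map_iff. exists (gmul h g). split; auto.
  rewrite gmulA, gmulVl, gmul1l. reflexivity.
Qed.

Lemma scp_factor (G : Group) (X Y : Flow G) (f : X -> Y) :
  flow_morphism f -> (forall y, exists x, f x = y) ->
  separated_covering X -> separated_covering Y.
Proof.
  intros [hc heq] hsurj hX D U hU [y0 hy0].
  destruct (hsurj y0) as [x0 hx0].
  destruct (hX D (fun x => U (f x))) as [S [hS hcov]].
  - exact (hc U hU).
  - exists x0. rewrite hx0; auto.
  - exists S. split; auto. intros y. destruct (hsurj y) as [x <-].
    destruct (hcov x) as [s [hs hu]]. exists s. split; auto. rewrite <- heq; auto.
Qed.

Definition orel {G : Group} (N : G -> Prop) (X : Flow G) (x y : X) : Prop :=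
  exists n, N n /\ y = fact X n x.
Definition QT {G : Group} (N : G -> Prop) (X : Flow G) : Type :=
  {A : X -> Prop | exists x, A = orel N X x}.
Definition cls {G : Group} (N : G -> Prop) (X : Flow G) (x : X) : QT N X :=
  exist _ (orel N X x) (ex_intro _ x eq_refl).


Lemma qt_ext {G : Group} {N : G -> Prop} {X : Flow G} (A B : QT N X) :
  proj1_sig A = proj1_sig B -> A = B.
Proof.
  destruct A as [a pa], B as [b pb]; simpl; intros ->; f_equal; apply proof_irrelevance.
Qed.

Lemma cls_surj {G : Group} {N : G -> Prop} {X : Flow G} (A : QT N X) :
  exists x, cls N X x = A.
Proof. destruct A as [a [x ->]]; exists x; apply qt_ext; reflexivity. Qed.

Lemma orel_N {G H : Group} {N : G -> Prop} {pi : G -> H} (hq : is_quotient_map N pi) g :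
  N g <-> pi g = gone.
Proof. destruct hq as [_ [_ h]]. split; apply h. Qed.

Lemma orel_refl {G H : Group} {N : G -> Prop} {pi : G -> H} (hq : is_quotient_map N pi)
  (X : Flow G) (x : X) : orel N X x x.
Proof.
  exists gone. split. apply (orel_N hq). apply pi_one, hq. rewrite fact_one; auto.
Qed.

Lemma orel_sym {G H : Group} {N : G -> Prop} {pi : G -> H} (hq : is_quotient_map N pi)
  (X : Flow G) (x y : X) : orel N X x y -> orel N X y x.
Proof.
  intros [n [hn ->]]. exists (ginv n). split.
  - apply (orel_N hq). apply (orel_N hq) in hn. rewrite (pi_inv (proj1 hq)), hn.
    rewrite <- (gmulVl H gone) at 2. rewrite gmul1r. reflexivity.
  - rewrite <- fact_mul, gmulVl, fact_one. reflexivity.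
Qed.

Lemma orel_trans {G H : Group} {N : G -> Prop} {pi : G -> H} (hq : is_quotient_map N pi)
  (X : Flow G) (x y z : X) : orel N X x y -> orel N X y z -> orel N X x z.
Proof.
  intros [n [hn ->]] [m [hm ->]]. exists (gmul m n). split.
  - apply (orel_N hq). apply (orel_N hq) in hn. apply (orel_N hq) in hm.
    rewrite (proj1 hq), hn, hm, gmul1l. reflexivity.
  - rewrite fact_mul. reflexivity.
Qed.

Lemma cls_eq {G H : Group} {N : G -> Prop} {pi : G -> H} (hq : is_quotient_map N pi)
  (X : Flow G) (x y : X) : orel N X x y -> cls N X x = cls N X y.
Proof.
  intros hxy. apply qt_ext; simpl. apply functional_extensionality; intro z.
  apply propositional_extensionality. split; intros h.
  - apply (orel_trans hq) with x; auto. apply (orel_sym hq); auto.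
  - apply (orel_trans hq) with y; auto.
Qed.

Lemma cls_inj {G H : Group} {N : G -> Prop} {pi : G -> H} (hq : is_quotient_map N pi)
  (X : Flow G) (x y : X) : cls N X x = cls N X y -> orel N X x y.
Proof.
  intros h. apply (f_equal (@proj1_sig _ _)) in h. simpl in h.
  rewrite h. apply (orel_refl hq).
Qed.

Definition rep {G : Group} {N : G -> Prop} {X : Flow G} (A : QT N X) : X :=
  proj1_sig (constructive_indefinite_description _ (proj2_sig A)).

Lemma rep_spec {G : Group} {N : G -> Prop} {X : Flow G} (A : QT N X) :
  cls N X (rep A) = A.
Proof.
  apply qt_ext. unfold rep. destruct (constructive_indefinite_description _ _) as [x hx].
  simpl. symmetry. exact hx.
Qed.

Definition lift {G H : Group} {N : G -> Prop} {pi : G -> H} (hq : is_quotient_map N pi)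
  (h : H) : G := proj1_sig (constructive_indefinite_description _ (proj1 (proj2 hq) h)).

Lemma lift_spec {G H : Group} {N : G -> Prop} {pi : G -> H} (hq : is_quotient_map N pi) h :
  pi (lift hq h) = h.
Proof. unfold lift. destruct (constructive_indefinite_description _ _) as [g hg]. exact hg. Qed.

Definition qact {G H : Group} {N : G -> Prop} {pi : G -> H} (hq : is_quotient_map N pi)
  (X : Flow G) (h : H) (A : QT N X) : QT N X := cls N X (fact X (lift hq h) (rep A)).

Lemma qact_cls {G H : Group} {N : G -> Prop} {pi : G -> H} (hq : is_quotient_map N pi)
  (X : Flow G) h g (x : X) : pi g = h -> qact hq X h (cls N X x) = cls N X (fact X g x).
Proof.
  intros hg. unfold qact. apply (cls_eq hq).
  assert (hr : orel N X (rep (cls N X x)) x) by (apply (cls_inj hq); apply rep_spec).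
  revert hr. generalize (rep (cls N X x)). intros r [n [hn hx]]. rewrite hx.
  set (l := lift hq h).
  exists (gmul (gmul g n) (ginv l)). split.
  - apply (orel_N hq). apply (orel_N hq) in hn.
    rewrite (proj1 hq), (proj1 hq), hn, (pi_inv (proj1 hq)), gmul1r, hg.
    unfold l; rewrite lift_spec. apply gmulVr.
  - rewrite <- !fact_mul. f_equal. rewrite <- gmulA, gmulVl, gmul1r. reflexivity.
Qed.

Definition qtop {G : Group} (N : G -> Prop) (X : Flow G) : Topology (QT N X).
Proof.
  refine {| is_open := fun W => is_open (ftop X) (fun x => W (cls N X x)) |}.
  - exact (open_full (ftop X)).
  - intros U V hU hV. exact (open_inter (ftop X) _ _ hU hV).
  - intros F hF.
    apply open_ext with (fun x => exists V, (exists U, F U /\ V = fun y => U (cls N X y)) /\ V x).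
    + apply open_union. intros V [U [hU ->]]. auto.
    + intros x; split.
      * intros [V [[U [hU ->]] hv]]; eauto.
      * intros [U [hU hu]]. exists (fun y => U (cls N X y)); eauto.
Defined.

Definition img {G : Group} (N : G -> Prop) (X : Flow G) (U : X -> Prop) : QT N X -> Prop :=
  fun A => exists z, A = cls N X z /\ U z.

Lemma img_open {G H : Group} {N : G -> Prop} {pi : G -> H} (hq : is_quotient_map N pi)
  (X : Flow G) (U : X -> Prop) : is_open (ftop X) U -> is_open (qtop N X) (img N X U).
Proof.
  intros hU. simpl. unfold img.
  apply open_ext with (fun w => exists W, (exists n, N n /\ W = fun w => U (fact X n w)) /\ W w).
  - apply open_union. intros W [n [_ ->]]. exact (fact_cont X n U hU).
  - intros w; split.
    + intros [W [[n [hn ->]] hw]]. exists (fact X n w). split; auto.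
      apply (cls_eq hq). exists n; auto.
    + intros [z [hz hu]]. apply (cls_inj hq) in hz. destruct hz as [n [hn ->]].
      exists (fun w => U (fact X n w)). eauto.
Qed.

Lemma q_one {G H : Group} {N : G -> Prop} {pi : G -> H} (hq : is_quotient_map N pi)
  (X : Flow G) (A : QT N X) : qact hq X gone A = A.
Proof.
  destruct (cls_surj A) as [x <-]. rewrite (qact_cls hq X gone gone x).
  rewrite fact_one; auto. apply pi_one, hq.
Qed.

Lemma q_mul {G H : Group} {N : G -> Prop} {pi : G -> H} (hq : is_quotient_map N pi)
  (X : Flow G) h k (A : QT N X) : qact hq X (gmul h k) A = qact hq X h (qact hq X k A).
Proof.
  destruct (cls_surj A) as [x <-].
  rewrite (qact_cls hq X k (lift hq k) x (lift_spec hq k)).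
  rewrite (qact_cls hq X h (lift hq h) _ (lift_spec hq h)).
  rewrite (qact_cls hq X (gmul h k) (gmul (lift hq h) (lift hq k)) x).
  - rewrite fact_mul; auto.
  - rewrite (proj1 hq), !lift_spec; auto.
Qed.

Lemma q_cont {G H : Group} {N : G -> Prop} {pi : G -> H} (hq : is_quotient_map N pi)
  (X : Flow G) h : continuous (qtop N X) (qtop N X) (qact hq X h).
Proof.
  intros V hV. simpl in *.
  apply open_ext with (fun x => V (cls N X (fact X (lift hq h) x))).
  - exact (fact_cont X (lift hq h) _ hV).
  - intros x. rewrite (qact_cls hq X h (lift hq h) x (lift_spec hq h)). tauto.
Qed.

Lemma q_compact {G H : Group} {N : G -> Prop} {pi : G -> H} (hq : is_quotient_map N pi)
  (X : Flow G) : compact (qtop N X).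
Proof.
  intros F hF hcov.
  destruct (fcompact X (fun W => exists U, F U /\ W = fun x => U (cls N X x))) as [l [hl1 hl2]].
  - intros W [U [hU ->]]. exact (hF U hU).
  - intros x. destruct (hcov (cls N X x)) as [U [hU hu]]. exists (fun y => U (cls N X y)). eauto.
  - destruct (list_lift _ _ (fun (U : QT N X -> Prop) (W : X -> Prop) => F U /\ W = fun x => U (cls N X x)) l) as [la [h1 h2]].
    + intros W hW. destruct (hl1 W hW) as [U [hU ->]]. eauto.
    + exists la. split.
      * intros U hU. destruct (h1 U hU) as [W [_ [hF' _]]]; auto.
      * intros A. destruct (cls_surj A) as [x <-]. destruct (hl2 x) as [W [hW hw]].
        destruct (h2 W hW) as [U [hU [_ ->]]]. eauto.
Qed.

Lemma sep_list (G : Group) (X : Flow G) (x : X) (P : G -> Prop) (ys : G -> X) (l : list G) :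
  (forall m, In m l -> P m -> x <> ys m) ->
  exists U, is_open (ftop X) U /\ U x /\
    forall m, In m l -> P m -> exists V, is_open (ftop X) V /\ V (ys m) /\ forall z, ~ (U z /\ V z).
Proof.
  induction l as [|m l IH]; intros hne.
  - exists (fun _ => True). split. apply open_full. split; auto. intros m [].
  - destruct IH as [U2 [hU2 [hx2 h2]]]. { intros m' hm'; apply hne; right; auto. }
    destruct (classic (P m)) as [pm|npm].
    + destruct (fhausdorff X (hne m (or_introl eq_refl) pm)) as [U1 [V1 [hU1 [hV1 [hx1 [hy1 hd1]]]]]].
      exists (fun z => U1 z /\ U2 z). split. apply open_inter; auto. split; auto.
      intros m' [<-|hm'] hp.
      * exists V1. split; auto. split; auto. intros z [[a b] c]. apply (hd1 z); auto.
      * destruct (h2 m' hm' hp) as [V [hV [hv hd]]]. exists V. split; auto. split; auto.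
        intros z [[a b] c]. apply (hd z); auto.
    + exists U2. split; auto. split; auto. intros m' [<-|hm'] hp.
      * contradiction.
      * auto.
Qed.

Lemma q_hausdorff {G H : Group} {N : G -> Prop} {pi : G -> H} (hq : is_quotient_map N pi)
  (X : Flow G) : finite_pred N -> hausdorff (qtop N X).
Proof.
  intros [nl hnl] A B hAB.
  destruct (cls_surj A) as [x <-]. destruct (cls_surj B) as [y <-].
  destruct (sep_list _ X x N (fun m => fact X m y) nl) as [U [hU [hx hsep]]].
  { intros m _ hm e. apply hAB. apply (cls_eq hq). apply (orel_sym hq). exists m; auto. }
  set (Ext := fun p => exists V, is_open (ftop X) V /\ V p /\ forall z, ~ (U z /\ V z)).
  set (V' := fun w => forall m, In m nl -> N m -> Ext (fact X m w)).
  assert (hExt : is_open (ftop X) Ext).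
  { apply open_ext with (fun p => exists V, (is_open (ftop X) V /\ forall z, ~ (U z /\ V z)) /\ V p).
    - apply open_union. intros V [h _]; auto.
    - intros p; unfold Ext; split.
      + intros [V [[a b] c]]; eauto.
      + intros [V [a [b c]]]; eauto. }
  assert (hV' : is_open (ftop X) V').
  { apply open_inter_list. intros m _. apply open_impl. exact (fact_cont X m _ hExt). }
  exists (img N X U), (img N X V').
  split; [apply (img_open hq); auto|].
  split; [apply (img_open hq); auto|].
  split; [exists x; auto|].
  split.
  - exists y. split; [reflexivity|]. intros m hm hn. apply hsep; auto.
  - intros C [[z [-> hz]] [w [hzw hw]]].
    apply (cls_inj hq) in hzw. apply (orel_sym hq) in hzw. destruct hzw as [k [hk ->]].
    destruct (hw k (hnl k hk) hk) as [V [_ [hv hd]]]. apply (hd _ (conj hz hv)).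
Qed.

Definition QFlow {G H : Group} {N : G -> Prop} {pi : G -> H} (hq : is_quotient_map N pi)
  (X : Flow G) (hfin : finite_pred N) : Flow H :=
  {| fcar := QT N X; ftop := qtop N X; fact := qact hq X;
     fact_one := q_one hq X; fact_mul := q_mul hq X; fact_cont := q_cont hq X;
     fcompact := q_compact hq X; fhausdorff := q_hausdorff hq X hfin |}.

Lemma q_minimal {G H : Group} {N : G -> Prop} {pi : G -> H} (hq : is_quotient_map N pi)
  (X : Flow G) (hfin : finite_pred N) : minimal_flow X -> minimal_flow (QFlow hq X hfin).
Proof.
  intros [[x0 _] hmin]. split. exists (cls N X x0); auto.
  intros C hC hinv.
  destruct (hmin (fun x => C (cls N X x))) as [h|h].
  - exact hC.
  - intros g x hx. simpl in hinv.
    rewrite <- (qact_cls hq X (pi g) g x eq_refl). apply hinv; auto.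
  - left. intros A; destruct (cls_surj A) as [x <-]; apply h.
  - right. intros A; destruct (cls_surj A) as [x <-]; apply h.
Qed.

Lemma build_P (G : Group) (X : Flow G) (U : X -> Prop) (x0 : X) (D : list G) :
  (forall (y : X) (F : list G), exists c, U (fact X c y) /\ ~ In c F) ->
  forall l : list G, exists P : list (G * G),
    (forall k, In k l -> exists c, In (k, c) P) /\
    (forall p, In p P -> U (fact X (snd p) (fact X (ginv (fst p)) x0))) /\
    (forall p q, In p P -> In q P -> snd p <> snd q ->
       forall d1 d2, In d1 D -> In d2 D -> gmul d1 (snd p) <> gmul d2 (snd q)).
Proof.
  intros hret l. induction l as [|k l IH].
  - exists nil. split; [intros _ []|split; [intros p []|intros p q []]].
  - destruct IH as [P [h1 [h2 h3]]].
    destruct (hret (fact X (ginv k) x0)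
      (flat_map (fun d1 => flat_map (fun d2 => map (fun c' => gmul (ginv d1) (gmul d2 c')) (map snd P)) D) D))
      as [c [hc hnc]].
    assert (hF : forall d1 d2 q, In d1 D -> In d2 D -> In q P -> gmul d1 c <> gmul d2 (snd q)).
    { intros d1 d2 q hd1 hd2 hq e. apply hnc. apply in_flat_map. exists d1. split; auto.
      apply in_flat_map. exists d2. split; auto. apply in_map_iff. exists (snd q). split.
      - rewrite <- e, gmulA, gmulVl, gmul1l. reflexivity.
      - apply in_map; auto. }
    exists ((k, c) :: P). split; [|split].
    + intros k' [<-|hk']. exists c; left; auto. destruct (h1 k' hk') as [c' hc']. exists c'; right; auto.
    + intros p [<-|hp]; auto.
    + intros p q [<-|hp] [<-|hq'] hne d1 d2 hd1 hd2; simpl in *.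
      * contradiction.
      * apply hF; auto.
      * intros e. apply (hF d2 d1 p hd2 hd1 hp). auto.
      * apply h3; auto.
Qed.

Theorem lemma6p3 (G : Group) (N : G -> Prop) (H : Group) (pi : G -> H) :
  countable_type G -> infinite_type G ->
  is_normal_subgroup N -> finite_pred N ->
  is_quotient_map N pi ->
  (exists MH : Flow H, universal_minimal_flow MH /\ separated_covering MH) ->
  forall MG : Flow G, universal_minimal_flow MG -> separated_covering MG.
Proof.
  intros _ hinf _ hfin hq [MH [[_ hMHuniv] hMHscp]] MG [hMGmin _].
  destruct (hMHuniv (QFlow hq MG hfin) (q_minimal hq MG hfin hMGmin)) as [f [hf hfs]].
  pose proof (@scp_factor _ _ _ _ hf hfs hMHscp) as hQ.
  intros D U hU [x0 hx0].
  pose proof hfin as [nl hnl].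
  destruct (build_P _ _ U x0 D (@return_inf _ _ _ hinf hMGmin hU (ex_intro _ x0 hx0)) nl) as [P [hP1 [hP2 hP3]]].
  set (U'' := fun z => forall p, In p P -> U (fact MG (snd p) (fact MG (ginv (fst p)) z))).
  assert (hU'' : is_open (ftop MG) U'').
  { apply open_inter_list. intros p _.
    exact (fact_cont MG (ginv (fst p)) _ (fact_cont MG (snd p) U hU)). }
  set (D' := flat_map (fun d => map (fun p => pi (gmul d (snd p))) P) D).
  destruct (hQ D' (img N MG U'')) as [S' [hS'sep hS'cov]].
  - exact (img_open hq MG U'' hU'').
  - exists (cls N MG x0). exists x0. split; [reflexivity|]. intros p hp. apply hP2; auto.
  - exists (fun s => exists p s', In p P /\ S' s' /\ s = gmul (snd p) (lift hq s')). split.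
    + intros s t [p1 [s1 [hp1 [hs1 ->]]]] [p2 [s2 [hp2 [hs2 ->]]]] hne d1 d2 hd1 hd2 heq.
      destruct (classic (s1 = s2)) as [<-|hne'].
      * destruct (classic (snd p1 = snd p2)) as [e|e].
        -- apply hne. rewrite e. reflexivity.
        -- apply (hP3 p1 p2 hp1 hp2 e d1 d2 hd1 hd2).
           apply gcancel_r with (lift hq s1). rewrite <- !gmulA. exact heq.
      * apply (hS'sep s1 s2 hs1 hs2 hne' (pi (gmul d1 (snd p1))) (pi (gmul d2 (snd p2)))).
        -- apply in_flat_map. exists d1. split; auto. apply in_map_iff. exists p1; auto.
        -- apply in_flat_map. exists d2. split; auto. apply in_map_iff. exists p2; auto.
        -- rewrite <- (lift_spec hq s1), <- (lift_spec hq s2), <- !(proj1 hq), <- !gmulA, heq.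
           reflexivity.
    + intros x. destruct (hS'cov (cls N MG x)) as [s' [hs' hv]].
      simpl in hv. rewrite (qact_cls hq MG s' (lift hq s') x (lift_spec hq s')) in hv.
      destruct hv as [z [hz hu]]. apply (cls_inj hq) in hz. destruct hz as [k [hk ->]].
      destruct (hP1 k (hnl k hk)) as [c hc].
      exists (gmul c (lift hq s')). split.
      * exists (k, c), s'. auto.
      * specialize (hu (k, c) hc). simpl in hu.
        rewrite <- (fact_mul MG (ginv k) k), gmulVl, fact_one, <- fact_mul in hu. exact hu.
Qed.
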